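(* For every positive integer $n$, $$\sum_{j=1}^{n}\csc^6\left(\frac{\pi j}{2n+1}\right) = \frac{8(n+1)n(8n^4+16n^3+35n^2+27n+54)}{945}.$$ *)

(* Defs.v *)
From Stdlib Require Import Reals.
Open Scope R_scope.

Definition csc (x : R) : R := / sin x.

(* Main.v *)
Require Import Defs.
From Stdlib Require Import Reals.
Open Scope R_scope.
From Stdlib Require Lia Lra.

Definition stmt13 : Prop := forall (n : nat) (hn : (1 <= n)%nat),
  sum_f 1 n (fun j => (csc (PI * INR j / INR (2 * n + 1))) ^ 6)
  = 8 * (INR n + 1) * INR n
      * (8 * INR n ^ 4 + 16 * INR n ^ 3 + 35 * INR n ^ 2 + 27 * INR n + 54) / 945.

Module TrigFacts.
Import Lia Lra.

Definition th n k := PI * INR (k + 1) / INR (2 * n + 1).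

Lemma th_bounds n k : (k < n)%nat -> 0 < th n k < PI / 2.
Proof.
intros hk. unfold th.
assert (hm : 0 < INR (2 * n + 1)) by (apply lt_0_INR; lia).
assert (hr : 0 < INR (k + 1)) by (apply lt_0_INR; lia).
assert (h2 : 2 * INR (k + 1) < INR (2 * n + 1)).
{ replace (2 * INR (k + 1)) with (INR (2 * (k + 1))) by (rewrite mult_INR; simpl; ring).
  apply lt_INR; lia. }
pose proof PI_RGT_0 as hpi.
split.
- apply Rdiv_lt_0_compat; [apply Rmult_lt_0_compat|]; assumption.
- apply (Rmult_lt_reg_r (2 * INR (2 * n + 1))). nra.
  field_simplify; try lra. nra.
Qed.

Lemma th_lt n k1 k2 : (k1 < k2)%nat -> (k2 < n)%nat -> th n k1 < th n k2.
Proof.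
intros h1 h2. unfold th.
assert (hm : 0 < INR (2 * n + 1)) by (apply lt_0_INR; lia).
assert (h : INR (k1 + 1) < INR (k2 + 1)) by (apply lt_INR; lia).
pose proof PI_RGT_0 as hpi.
unfold Rdiv. apply Rmult_lt_compat_r. apply Rinv_0_lt_compat; lra.
nra.
Qed.

Lemma tan_th_pos n k : (k < n)%nat -> 0 < tan (th n k).
Proof.
intros hk. destruct (th_bounds n k hk) as [h1 h2].
unfold tan. apply Rdiv_lt_0_compat.
apply sin_gt_0; lra. apply cos_gt_0; lra.
Qed.

Lemma tan_th_lt n k1 k2 : (k1 < k2)%nat -> (k2 < n)%nat -> tan (th n k1) < tan (th n k2).
Proof.
intros h1 h2. assert (hk1 : (k1 < n)%nat) by lia. destruct (th_bounds n k1 hk1). destruct (th_bounds n k2 h2).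
apply tan_increasing; [lra | apply th_lt; auto | lra].
Qed.

Lemma cos_th_neq0 n k : (k < n)%nat -> cos (th n k) <> 0.
Proof.
intros hk. destruct (th_bounds n k hk). apply Rgt_not_eq, cos_gt_0; lra.
Qed.

Lemma sin_mth n k : sin (INR (2 * n + 1) * th n k) = 0.
Proof.
apply sin_eq_0_1. exists (Z.of_nat (k + 1)). rewrite <- INR_IZR_INZ.
unfold th. field. apply not_0_INR. lia.
Qed.
Lemma sin_th_neq0 n k : (k < n)%nat -> sin (th n k) <> 0.
Proof.
intros hk. destruct (th_bounds n k hk). apply Rgt_not_eq, sin_gt_0; lra.
Qed.
Definition lhsS n := sum_f_R0 (fun k => csc (th n k) ^ 6) (n - 1).
Definition rhsS (y : R) : R := 8 * (y + 1) * y * (8 * y ^ 4 + 16 * y ^ 3 + 35 * y ^ 2 + 27 * y + 54) / 945.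
End TrigFacts.
Import TrigFacts.

From mathcomp Require all_boot all_order all_algebra.
From mathcomp Require Rstruct.
From mathcomp Require ring lra.

Module Helpers.
Import TrigFacts.
Import all_boot all_order all_algebra Rstruct ring lra.
Import Order.TTheory GRing.Theory Num.Theory.
Local Open Scope ring_scope.


Lemma rhs_conv (y : R) : rhsS y
  = (8 * (y + 1) * y * (8 * y ^+ 4 + 16 * y ^+ 3 + 35 * y ^+ 2 + 27 * y + 54) / 945).
Proof. rewrite /rhsS !RealsE ![nat_of_pos _]/=. ring. Qed.
Fixpoint Pr (s : seq R) : {poly R} :=
  match s with
  | [::] => 1
  | a :: s' => Pr s' - a *: (Pr s' * 'X)
  end.

Definition ps (k : nat) (s : seq R) := \sum_(a <- s) a ^+ k.

Lemma Pr_coef s : let p1 := ps 1 s in let p2 := ps 2 s in let p3 := ps 3 s in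
  [/\ (Pr s)`_0 = 1, (Pr s)`_1 = - p1, 2 * (Pr s)`_2 = p1 ^+ 2 - p2
   & 6 * (Pr s)`_3 = - (p1 ^+ 3 - 3 * p1 * p2 + 2 * p3)].
Proof.
elim: s => [|a s IH] /=.
  by rewrite /ps !big_nil !coefC /=; split; ring.
case: IH => c0 c1 c2 c3.
rewrite /ps !big_cons -/(ps 1 s) -/(ps 2 s) -/(ps 3 s).
rewrite !(coefB, coefZ, coefMX) /=.
split.
- by rewrite c0 mulr0 subr0.
- rewrite c1 c0; ring.
- rewrite c1 mulrBr c2; ring.
- rewrite mulrBr c3 (_ : 6 * (a * (Pr s)`_2) = 3 * a * (2 * (Pr s)`_2)); last by ring.
  rewrite c2; ring.
Qed.

Lemma Pr_size s : (size (Pr s) <= (size s).+1)%N.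
Proof.
elim: s => [|a s IH] /=; first by rewrite size_poly1.
apply/leq_sizeP => j hj.
rewrite !(coefB, coefZ, coefMX).
have -> : (Pr s)`_j = 0 by apply: (leq_sizeP _ _ IH); apply: leq_trans hj.
case: eqP => [_|hj0]; first by rewrite mulr0 subr0.
have -> : (Pr s)`_j.-1 = 0.
  by apply: (leq_sizeP _ _ IH); case: j hj hj0.
by rewrite mulr0 subr0.
Qed.

Lemma Pr_horner s x : (Pr s).[x] = \prod_(a <- s) (1 - a * x).
Proof.
elim: s => [|a s IH] /=; first by rewrite big_nil hornerC.
rewrite big_cons hornerD hornerN hornerZ hornerMX IH. ring.
Qed.
Fixpoint UV (n : nat) : {poly R} * {poly R} :=
  match n with
  | 0 => (1, 1)
  | n'.+1 => let (U, V) := UV n' in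
      (U - U * 'X - (V * 'X) *+ 2, U *+ 2 + V - V * 'X)
  end.

Lemma UV_size n : (size (UV n).1 <= n.+1)%N /\ (size (UV n).2 <= n.+1)%N.
Proof.
elim: n => [|n]; first by rewrite /= size_poly1.
move=> IH /=; case: (UV n) IH => U V /= [hU hV].
have z1 j : (n.+2 <= j)%N -> U`_j = 0 /\ V`_j = 0 /\ U`_j.-1 = 0 /\ V`_j.-1 = 0.
  move=> hj; split; first by apply: (leq_sizeP _ _ hU); apply: leq_trans hj.
  split; first by apply: (leq_sizeP _ _ hV); apply: leq_trans hj.
  by case: j hj => // j hj; split; [apply: (leq_sizeP _ _ hU)|apply: (leq_sizeP _ _ hV)].
split; apply/leq_sizeP => j hj /=; have [a [b [c d]]] := z1 j hj;
  rewrite !(coefB, coefD, coefMn, coefMX) ?a ?b; case: eqP => _; rewrite ?c ?d; ring.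
Qed.

Lemma U_S n : (UV n.+1).1 = (UV n).1 - (UV n).1 * 'X - ((UV n).2 * 'X) *+ 2.
Proof. by rewrite /=; case: (UV n). Qed.
Lemma V_S n : (UV n.+1).2 = (UV n).1 *+ 2 + (UV n).2 - (UV n).2 * 'X.
Proof. by rewrite /=; case: (UV n). Qed.
Lemma U_0 : (UV 0).1 = 1. Proof. by []. Qed.
Lemma V_0 : (UV 0).2 = 1. Proof. by []. Qed.

Lemma UV_trig n (x : R) : cos x <> 0 ->
  let t := sin x / cos x in
  cos ((2 * n + 1)%N%:R * x) = cos x ^+ (2 * n + 1)%N * ((UV n).1).[t ^+ 2] /\
  sin ((2 * n + 1)%N%:R * x) = cos x ^+ (2 * n + 1)%N * t * ((UV n).2).[t ^+ 2].
Proof.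
move=> hc t.
have ht : sin x = t * cos x by rewrite /t divfK //; apply/eqP.
elim: n => [|n [hU hV]].
  rewrite U_0 V_0 !hornerC !RmultE (_ : (2*0+1)%N%:R * x = x); last by ring.
  by rewrite expr1 !mulr1 ht; split => //; exact: mulrC.
rewrite U_S V_S !RmultE.
rewrite (_ : (2 * n.+1 + 1)%N%:R * x = (2 * n + 1)%N%:R * x + (x + x)); last first.
  rewrite -[n.+1]addn1; ring.
rewrite sinD cosD hU hV !sinD !cosD ht.
rewrite (_ : (2 * n.+1 + 1 = (2 * n + 1).+2)%N); last by rewrite -[n.+1]addn1 mulnDr; ring.
rewrite !exprS.
rewrite !(hornerD, hornerN, hornerMn, hornerMX).
split; ring.
Qed.
Definition c2 (x : R) := let m := 2*x+1 in m*(m-1).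
Definition c3 (x : R) := let m := 2*x+1 in m*(m-1)*(m-2).
Definition c4 (x : R) := let m := 2*x+1 in m*(m-1)*(m-2)*(m-3).
Definition c5 (x : R) := let m := 2*x+1 in m*(m-1)*(m-2)*(m-3)*(m-4).
Definition c6 (x : R) := let m := 2*x+1 in m*(m-1)*(m-2)*(m-3)*(m-4)*(m-5).
Definition c7 (x : R) := let m := 2*x+1 in m*(m-1)*(m-2)*(m-3)*(m-4)*(m-5)*(m-6).

Lemma coefUV n : let x := n%:R in let U := (UV n).1 in let V := (UV n).2 in
  [/\ U`_0 = 1, 2 * U`_1 = - c2 x, 24 * U`_2 = c4 x & 720 * U`_3 = - c6 x] /\
  [/\ V`_0 = 2*x+1, 6 * V`_1 = - c3 x, 120 * V`_2 = c5 x & 5040 * V`_3 = - c7 x].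
Proof.
elim: n => [|n IH] /=.
  rewrite /c2 /c3 /c4 /c5 /c6 /c7 !coefC /=; split; split; ring.
rewrite U_S V_S; case: IH => [[u0 u1 u2 u3] [v0 v1 v2 v3]].
rewrite !(coefB, coefD, coefMn, coefMX) /=.
rewrite /c2 /c3 /c4 /c5 /c6 /c7 in u1 u2 u3 v1 v2 v3 *.
rewrite -[n.+1]addn1 natrD.
split; split.
all: try (rewrite ?u0 ?v0; ring). all: lra.
Qed.

Lemma sum_cube (s : seq R) :
  \sum_(a <- s) (1 + a) ^+ 3 = (size s)%:R + 3 * ps 1 s + 3 * ps 2 s + ps 3 s.
Proof.
elim: s => [|a s IH]; first by rewrite /ps !big_nil /=; ring.
rewrite /ps !big_cons -/(ps 1 s) -/(ps 2 s) -/(ps 3 s) IH /= -addn1 natrD; ring.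
Qed.

Lemma final_alg (x p1 p2 p3 : R) : 0 <= x ->
  6 * (2 * x + 1) * p1 = c3 x ->
  60 * (2 * x + 1) * (p1 ^+ 2 - p2) = c5 x ->
  840 * (2 * x + 1) * (p1 ^+ 3 - 3 * p1 * p2 + 2 * p3) = c7 x ->
  x + 3 * p1 + 3 * p2 + p3 =
  8 * (x + 1) * x * (8 * x ^+ 4 + 16 * x ^+ 3 + 35 * x ^+ 2 + 27 * x + 54) / 945.
Proof.
move=> hx h1 h2 h3.
have hm : 2 * x + 1 != 0 by rewrite gt_eqF //; lra.
have e1 : p1 = c3 x / (6 * (2 * x + 1)).
  by rewrite -h1; field.
have e2 : p2 = p1 ^+ 2 - c5 x / (60 * (2 * x + 1)).
  by rewrite -h2; field.
have e3 : p3 = (c7 x / (840 * (2 * x + 1)) - p1 ^+ 3 + 3 * p1 * p2) / 2.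
  by rewrite -h3; field.
rewrite e3 e2 e1 /c3 /c5 /c7; field; exact: hm.
Qed.

Lemma main_sum n : (0 < n)%N ->
  \sum_(k <- iota 0 n) csc (th n k) ^+ 6 =
  8 * (n%:R + 1) * n%:R * (8 * n%:R ^+ 4 + 16 * n%:R ^+ 3 + 35 * n%:R ^+ 2 + 27 * n%:R + 54) / 945.
Proof.
move=> hn.
set m : R := (2 * n + 1)%N%:R.
have hm2 : m = 2 * n%:R + 1 by rewrite /m natrD natrM.
set tt := fun k => tan (th n k) ^+ 2.
set s := [seq (tt k)^-1 | k <- iota 0 n].
have kin k : k \in iota 0 n -> (k < n)%coq_nat.
  by rewrite mem_iota add0n => /andP [_ /ssrnat.ltP].
have cne k : k \in iota 0 n -> cos (th n k) != 0.
  by move=> /kin hk; apply/eqP; apply: cos_th_neq0.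
have sne k : k \in iota 0 n -> sin (th n k) != 0.
  by move=> /kin hk; apply/eqP; apply: sin_th_neq0.
have tpos k : k \in iota 0 n -> 0 < tan (th n k).
  by move=> /kin hk; apply/RltP; apply: tan_th_pos.
have tne k : k \in iota 0 n -> tt k != 0.
  by move=> hk; rewrite /tt expf_eq0 /= gt_eqF // tpos.
have Vroot k : k \in iota 0 n -> ((UV n).2).[tt k] = 0.
  move=> hk; have [_ hs] := UV_trig n (th n k) (cos_th_neq0 n k (kin k hk)).
  move: hs; rewrite (_ : sin (th n k) / cos (th n k) = tan (th n k)) //.
  have := sin_mth n k; rewrite INRE RmultE => ->.
  move/esym/eqP; rewrite !mulf_eq0 expf_eq0 (negbTE (cne k hk)) andbF /=.
  by rewrite RinvE (negbTE (sne k hk)) invr_eq0 (negbTE (cne k hk)) /= => /eqP.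
set D := (UV n).2 - m *: Pr s.
have hss : size s = n by rewrite size_map size_iota.
have Dsize : (size D <= n.+1)%N.
  apply/leq_sizeP => j hj; rewrite coefB coefZ.
  have [_ hV] := UV_size n.
  have hP := Pr_size s; rewrite hss in hP.
  by rewrite (leq_sizeP _ _ hV) // (leq_sizeP _ _ hP) // mulr0 subr0.
have Droots : all (root D) (0 :: map tt (iota 0 n)).
  rewrite /=; apply/andP; split.
    rewrite /root /D hornerD hornerN hornerZ !horner_coef0.
    have [_ [v0 _ _ _]] := coefUV n.
    have [c0 _ _ _] := Pr_coef s.
    by rewrite v0 c0 hm2 mulr1 subrr.
  apply/allP => _ /mapP [k hk ->].
  rewrite /root /D hornerD hornerN hornerZ Pr_horner Vroot //.
  have -> : \prod_(a <- s) (1 - a * tt k) = 0.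
    apply/eqP; rewrite prodf_seq_eq0; apply/hasP; exists (tt k)^-1.
      by apply: map_f.
    by rewrite /= mulVf ?tne // subrr.
  by rewrite mulr0 subrr.
have Duniq : uniq (0 :: map tt (iota 0 n)).
  rewrite /=; apply/andP; split.
    by apply/mapP => -[k hk /esym/eqP]; rewrite (negbTE (tne k hk)).
  rewrite map_inj_in_uniq ?iota_uniq //.
  have key k1 k2 : k1 \in iota 0 n -> k2 \in iota 0 n -> (k1 < k2)%N -> tt k1 != tt k2.
    move=> h1 h2 hlt.
    have := tan_th_lt n k1 k2 (ssrnat.ltP hlt) (kin k2 h2) => /RltP hlt'.
    have p1 := tpos k1 h1.
    rewrite /tt; apply/eqP => e.
    nra.
  move=> k1 k2 h1 h2 e; case: (ltngtP k1 k2) => // hlt.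
    by move: (key k1 k2 h1 h2 hlt); rewrite e eqxx.
  by move: (key k2 k1 h2 h1 hlt); rewrite e eqxx.
have D0 : D = 0.
  apply/eqP; apply: contraT => hD.
  have := max_poly_roots hD Droots Duniq.
  rewrite /= size_map size_iota => h.
  by have := leq_trans h Dsize; rewrite ltnn.
have cV k : (UV n).2`_k = m * (Pr s)`_k.
  have := congr1 (fun p : {poly R} => p`_k) D0.
  by rewrite /= coefB coefZ coef0 => /eqP; rewrite subr_eq0 => /eqP.
have [_ [_ v1 v2 v3]] := coefUV n.
have [_ q1 q2 q3] := Pr_coef s.
have h1 : 6 * (2 * n%:R + 1) * ps 1 s = c3 n%:R.
  by rewrite -[c3 _]opprK -v1 cV q1 hm2; ring.
have h2 : 60 * (2 * n%:R + 1) * (ps 1 s ^+ 2 - ps 2 s) = c5 n%:R.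
  by rewrite -v2 cV -q2 hm2; ring.
have h3 : 840 * (2 * n%:R + 1) * (ps 1 s ^+ 3 - 3 * ps 1 s * ps 2 s + 2 * ps 3 s) = c7 n%:R.
  rewrite -[c7 _]opprK -v3 cV.
  rewrite (_ : ps 1 s ^+ 3 - 3 * ps 1 s * ps 2 s + 2 * ps 3 s = - (6 * (Pr s)`_3)); last by rewrite q3 opprK.
  by rewrite hm2; ring.
have sc := sum_cube s; rewrite hss in sc.
rewrite -(@final_alg _ _ _ _ (ler0n R n) h1 h2 h3) -sc big_map.
apply: eq_big_seq => k hk.
rewrite /csc /tt RinvE.
have hsc : sin (th n k) ^+ 2 + cos (th n k) ^+ 2 = 1.
  by have := sin2_cos2 (th n k); rewrite /Rsqr RplusE !RmultE !expr2.
rewrite (_ : tan (th n k) = sin (th n k) / cos (th n k)) //.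
rewrite (_ : 1 + ((sin (th n k) / cos (th n k)) ^+ 2)^-1 = (sin (th n k) ^+ 2 + cos (th n k) ^+ 2) / sin (th n k) ^+ 2); last first.
  by field; rewrite sne ?cne.
rewrite hsc; field; exact: sne.
Qed.

Lemma final : stmt13.
Proof.
move=> n hn.
change (lhsS n = rhsS (INR n)); rewrite /lhsS.
have -> : Nat.sub n 1 = n.-1 by rewrite -subn1.
have hn' : (0 < n)%N by apply/ssrnat.leP.
rewrite rhs_conv sum_f_R0E prednK // /index_iota subn0.
rewrite (eq_bigr (fun k => (csc (th n k) ^+ 6)%R)); last by move=> k _; rewrite RpowE.
by rewrite main_sum // INRE.
Qed.
End Helpers.

Theorem mainTheorem13 (n : nat) (hn : (1 <= n)%nat) :
  sum_f 1 n (fun j => (csc (PI * INR j / INR (2 * n + 1))) ^ 6)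
  = 8 * (INR n + 1) * INR n
      * (8 * INR n ^ 4 + 16 * INR n ^ 3 + 35 * INR n ^ 2 + 27 * INR n + 54) / 945.
Proof.
exact (Helpers.final n hn).
Qed.
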